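(* Let $\lambda>0$, $\mathbf{A}\in\mathbb{R}^{m\times n}$ with columns $\mathbf{a}_1,\dots,\mathbf{a}_n$, let $f:\mathbb{R}^m\to\mathbb{R}\cup\{+\infty\}$ be proper, closed and convex, and let $h:\mathbb{R}\to\mathbb{R}\cup\{+\infty\}$ be proper, closed and convex with $0\in\mathrm{dom}(h)$, $h(0)=0$, and $0$ an accumulation point of $\mathrm{dom}(h)$. Let $\nu=(\mathcal{S}_0,\mathcal{S}_1,\mathcal{S}_\bullet)$ and $\nu'=(\mathcal{S}_0',\mathcal{S}_1',\mathcal{S}_\bullet')$ be partitions of $\{1,\dots,n\}$ with $\mathcal{S}_0\subseteq\mathcal{S}_0'$ and $\mathcal{S}_1\subseteq\mathcal{S}_1'$. Then for all $\mathbf{u}\in\mathbb{R}^m$, $$D^{\nu'}(\mathbf{u})=D^\nu(\mathbf{u})+\sum_{i\in\mathcal{S}_0'\setminus\mathcal{S}_0}\phi_0(\mathbf{a}_i^\top\mathbf{u})+\sum_{i\in\mathcal{S}_1'\setminus\mathcal{S}_1}\phi_1(\mathbf{a}_i^\top\mathbf{u}).$$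
   Context: $\|\mathbf{x}\|_0$ is the number of nonzero entries of $\mathbf{x}$; $\eta(\text{condition})=0$ if the condition holds and $+\infty$ otherwise; $\omega^*$ denotes the convex conjugate of a function $\omega$. An accumulation point $0$ of a set $\mathcal{C}\subseteq\mathbb{R}$: every neighborhood of $0$ contains a point of $\mathcal{C}$ other than $0$. For a partition $\nu=(\mathcal{S}_0,\mathcal{S}_1,\mathcal{S}_\bullet)$ of $\{1,\dots,n\}$: $\mathcal{X}^\nu=\{\mathbf{x}\in\mathbb{R}^n: x_i=0\ \forall i\in\mathcal{S}_0,\ x_i\neq0\ \forall i\in\mathcal{S}_1\}$; $g^\nu(\mathbf{x})=\lambda\|\mathbf{x}\|_0+\sum_{i=1}^n h(x_i)+\eta(\mathbf{x}\in\mathcal{X}^\nu)$; and $D^\nu(\mathbf{u})=-f^*(-\mathbf{u})-(g^\nu)^*(\mathbf{A}^\top\mathbf{u})$ for $\mathbf{u}\in\mathbb{R}^m$. The functions $\phi_0,\phi_1:\mathbb{R}\to\mathbb{R}\cup\{+\infty\}$ are $\phi_0(v)=\max(h^*(v)-\lambda,0)$ and $\phi_1(v)=\max(\lambda-h^*(v),0)$.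
   Formalization: The identity is claimed only for those u with $D^\nu(\mathbf{u})\neq-\infty$ or $\sum_{i\in\mathcal{S}_0'\setminus\mathcal{S}_0}\phi_0(\mathbf{a}_i^\top\mathbf{u})\neq+\infty$, not for all u ∈ ℝᵐ. The statement above fails without it. *)

(* Defs.v *)
From mathcomp Require Import all_boot all_order all_algebra.
From mathcomp Require Import all_classical all_reals.
From mathcomp Require Import ereal.
Set Implicit Arguments. Unset Strict Implicit. Unset Printing Implicit Defensive.
Import Order.TTheory GRing.Theory Num.Theory.
Local Open Scope ring_scope.
Local Open Scope ereal_scope.


Section Defs.
Variable R : realType.

Definition dotv (k : nat) (v x : 'cV[R]_k) : R := (\sum_(i < k) v i ord0 * x i ord0)%R.

Definition conjv (k : nat) (w : 'cV[R]_k -> \bar R) (v : 'cV[R]_k) : \bar R :=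
  ereal_sup (range (fun x => (dotv v x)%:E - w x)).
Definition conj1 (w : R -> \bar R) (v : R) : \bar R :=
  ereal_sup (range (fun x => (v * x)%:E - w x)).

Definition properv (k : nat) (w : 'cV[R]_k -> \bar R) :=
  (forall x, w x != -oo) /\ (exists x, w x < +oo).
Definition proper1 (w : R -> \bar R) :=
  (forall x, w x != -oo) /\ (exists x, w x < +oo).

(* closed = lower semicontinuous (for proper functions), sup-norm neighbourhoods *)
Definition closedv (k : nat) (w : 'cV[R]_k -> \bar R) :=
  forall x (a : R), a%:E < w x ->
    exists2 d : R, (0 < d)%R & forall y : 'cV[R]_k, (forall j, `|y j ord0 - x j ord0| < d)%R -> a%:E < w y.
Definition closed1 (w : R -> \bar R) :=
  forall x (a : R), a%:E < w x ->
    exists2 d : R, (0 < d)%R & forall y, (`|y - x| < d)%R -> a%:E < w y.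

Definition convexv (k : nat) (w : 'cV[R]_k -> \bar R) :=
  forall x y (t : R), (0 < t < 1)%R ->
    w (t *: x + (1 - t) *: y)%R <= t%:E * w x + (1 - t)%:E * w y.
Definition convex1 (w : R -> \bar R) :=
  forall x y (t : R), (0 < t < 1)%R ->
    w (t * x + (1 - t) * y)%R <= t%:E * w x + (1 - t)%:E * w y.

Definition dom1 (w : R -> \bar R) : set R := fun x => w x < +oo.

Definition accum0 (C : set R) :=
  forall e : R, (0 < e)%R -> exists x, C x /\ x != 0%R /\ (`|x| < e)%R.

Definition partition3 (n : nat) (S0 S1 Sb : {set 'I_n}) :=
  [/\ [disjoint S0 & S1], [disjoint S0 & Sb], [disjoint S1 & Sb]
    & S0 :|: S1 :|: Sb = [set: 'I_n]%SET].

Definition l0norm (n : nat) (x : 'cV[R]_n) : nat := #|[set i : 'I_n | x i ord0 != 0%R]|.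

Definition eta_X (n : nat) (S0 S1 : {set 'I_n}) (x : 'cV[R]_n) : \bar R :=
  if [forall i : 'I_n, ((i \in S0) ==> (x i ord0 == 0%R)) && ((i \in S1) ==> (x i ord0 != 0%R))]
  then 0 else +oo.

Definition g_nu (n : nat) (lam : R) (h : R -> \bar R) (S0 S1 : {set 'I_n})
  (x : 'cV[R]_n) : \bar R :=
  (lam * (l0norm x)%:R)%:E + (\sum_(i < n) h (x i ord0)) + eta_X S0 S1 x.

Definition D_nu (m n : nat) (A : 'M[R]_(m, n)) (f : 'cV[R]_m -> \bar R)
  (lam : R) (h : R -> \bar R) (S0 S1 : {set 'I_n}) (u : 'cV[R]_m) : \bar R :=
  - conjv f (- u)%R - conjv (g_nu lam h S0 S1) (A^T *m u)%R.

Definition phi0 (lam : R) (h : R -> \bar R) (v : R) : \bar R :=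
  maxe (conj1 h v - lam%:E) 0.
Definition phi1 (lam : R) (h : R -> \bar R) (v : R) : \bar R :=
  maxe (lam%:E - conj1 h v) 0.

End Defs.

(* Main.v *)
Require Import Defs.
From mathcomp Require Import all_boot all_order all_algebra.
From mathcomp Require Import all_classical all_reals.
From mathcomp Require Import ereal.
From mathcomp Require Import ring lra.
Import Order.TTheory GRing.Theory Num.Theory.
Local Open Scope ring_scope.
Local Open Scope ereal_scope.



Section Aux.
Variable R : realType.

Lemma sup_addr (T : Type) (F : T -> \bar R) (c S : \bar R) :
  (forall z, F z + c <= S) -> ereal_sup (range F) + c <= S.
Proof.
case: c => [r| |] H.
- rewrite -leeBrDr //; apply/ereal_supP => _ [z _ <-].
  by rewrite leeBrDr.
- have [->|] := eqVneq (ereal_sup (range F)) -oo; first by rewrite leNye.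
  move=> /negbTE sF; have : -oo < ereal_sup (range F).
    by rewrite lt_neqAle eq_sym sF leNye.
  move=> /ereal_sup_gt [_ [z _ <-]] Fz.
  have := H z; rewrite addey; last by rewrite gt_eqF.
  by rewrite leye_eq => /eqP ->; rewrite leey.
- by rewrite addeNy leNye.
Qed.

Lemma sup_add2 (T U : Type) (F : T -> \bar R) (G : U -> \bar R) (S : \bar R) :
  (forall z w, F z + G w <= S) ->
  ereal_sup (range F) + ereal_sup (range G) <= S.
Proof.
move=> H; rewrite addeC; apply: sup_addr => w; rewrite addeC.
exact: sup_addr.
Qed.

Lemma sup_sep (I : eqType) (Q : I -> R -> \bar R) (r : seq I) : uniq r ->
  ereal_sup (range (fun y : I -> R => \sum_(i <- r) Q i (y i))) =
  \sum_(i <- r) ereal_sup (range (Q i)).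
Proof.
elim: r => [|a r IH] /=.
  move=> _; rewrite big_nil; apply/le_anti/andP; split.
    by apply/ereal_supP => _ [y _ <-]; rewrite big_nil.
  by apply: ereal_sup_ubound; exists (fun _ => 0%R) => //; rewrite big_nil.
move=> /andP [ar ur]; rewrite big_cons -(IH ur).
apply/le_anti/andP; split.
  apply/ereal_supP => _ [y _ <-]; rewrite big_cons; apply: leeD.
    by apply: ereal_sup_ubound; exists (y a).
  by apply: ereal_sup_ubound; exists y.
apply: sup_add2 => z y.
apply: ereal_sup_ubound; exists (fun j => if j == a then z else y j) => //.
rewrite big_cons eqxx; congr (_ + _).
apply: eq_big_seq => i ir; case: eqP => // ia.
by move: ar; rewrite -ia ir.
Qed.

End Aux.



Section Coord.
Variable R : realType.
Variables (lam : R) (h : R -> \bar R).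
Hypotheses (hprop : proper1 h) (hconv : convex1 h) (h0 : h 0%R = 0)
  (hacc : accum0 (dom1 h)).

Definition E1 (v y : R) : \bar R := (v * y)%:E - h y - lam%:E.

Lemma conj1_ge0 v : 0 <= conj1 h v.
Proof.
by apply: ereal_sup_ubound; exists 0%R => //; rewrite mulr0 h0 sube0.
Qed.

Lemma near0 v e : (0 < e)%R -> exists y, y != 0%R /\ (- lam - e)%:E <= E1 v y.
Proof.
move=> e0; have [x1 [dx1 [x10 _]]] := hacc 1%R ltr01.
move: dx1; rewrite /dom1.
case Hx : (h x1) => [b| |] // _; last by case: hprop => /(_ x1); rewrite Hx.
pose c := (v * x1 - b)%R.
pose t := (e / (`|c| + e + 1))%R.
have nc := normr_ge0 c.
have Dp : (0 < `|c| + e + 1)%R by lra.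
have t0 : (0 < t)%R by rewrite divr_gt0.
have t1 : (t < 1)%R by rewrite /t ltr_pdivrMr // mul1r; lra.
have tc : (t * `|c| <= e)%R by rewrite /t mulrAC ler_pdivrMr //; nra.
have c1 := ler_norm c; have := ler_norm (- c); rewrite normrN => c2.
exists (t * x1)%R; split; first by rewrite mulf_neq0 // gt_eqF.
have hc := hconv x1 0%R t; rewrite mulr0 addr0 h0 mule0 adde0 Hx in hc.
have {}hc := hc (ltac:(by rewrite t0 t1)).
rewrite -EFinM in hc.
apply: (@le_trans _ _ ((v * (t * x1) - t * b - lam)%:E)).
  rewrite lee_fin.
  have : (- e <= t * c)%R by nra.
  rewrite /c; lra.
rewrite /E1 !EFinB; apply: leeB => //; apply: leeB => //.
Qed.

Lemma claimA v :
  ereal_sup (range (fun y => if y == 0%R then -oo else E1 v y)) =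
  conj1 h v - lam%:E.
Proof.
apply/le_anti/andP; split.
  apply/ereal_supP => _ [y _ <-]; case: eqP => _; first by rewrite leNye.
  rewrite /E1; apply: leeB => //; apply: ereal_sup_ubound; by exists y.
rewrite /conj1; apply: sup_addr => y.
have [->|yn0] := eqVneq y 0%R.
  rewrite mulr0 h0 sube0 add0e.
  apply/lee_addgt0Pr => e e0.
  have [y' [y'0 hy']] := @near0 v e e0.
  rewrite -leeBlDr // -EFinB; apply: (le_trans hy').
  by apply: ereal_sup_ubound; exists y' => //; rewrite (negbTE y'0).
by apply: ereal_sup_ubound; exists y => //; rewrite (negbTE yn0).
Qed.

Lemma claimB v :
  ereal_sup (range (fun y => if y == 0%R then 0 else E1 v y)) =
  maxe (conj1 h v - lam%:E) 0.
Proof.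
apply/le_anti/andP; split.
  apply/ereal_supP => _ [y _ <-]; rewrite le_max; case: eqP => _.
    by rewrite lexx orbT.
  rewrite /E1; apply/orP; left; apply: leeB => //.
  by apply: ereal_sup_ubound; exists y.
rewrite ge_max; apply/andP; split.
  rewrite -claimA; apply/ereal_supP => _ [y _ <-].
  apply: le_trans (_ : (if y == 0%R then 0 else E1 v y) <= _).
    by case: eqP => _; rewrite ?leNye.
  by apply: ereal_sup_ubound; exists y.
by apply: ereal_sup_ubound; exists 0%R => //; rewrite eqxx.
Qed.

Lemma claimC :
  ereal_sup (range (fun y : R => if y == 0%R then 0 else -oo)) = 0 :> \bar R.
Proof.
apply/le_anti/andP; split.
  by apply/ereal_supP => _ [y _ <-]; case: eqP.
by apply: ereal_sup_ubound; exists 0%R => //; rewrite eqxx.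
Qed.

End Coord.



Section Conj.
Variable R : realType.
Variables (lam : R) (h : R -> \bar R).
Hypotheses (hprop : proper1 h) (hconv : convex1 h) (h0 : h 0%R = 0)
  (hacc : accum0 (dom1 h)).
Variables (n : nat) (S0 S1 : {set 'I_n}).

Definition etai (i : 'I_n) (y : R) : \bar R :=
  if ((i \in S0) ==> (y == 0%R)) && ((i \in S1) ==> (y != 0%R)) then 0 else +oo.
Definition ki (i : 'I_n) (y : R) : \bar R :=
  (lam * (y != 0%R)%:R)%:E + h y + etai i y.

Lemma ki_neq (i : 'I_n) y : ki i y != -oo.
Proof.
rewrite /ki !adde_eq_ninfty negb_or; apply/andP; split.
  by rewrite negb_or; case: hprop => ->; rewrite andbT.
by rewrite /etai; case: ifP.
Qed.

Lemma g_sum (x : 'cV[R]_n) :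
  g_nu lam h S0 S1 x = \sum_(i < n) ki i (x i ord0).
Proof.
rewrite /g_nu /ki big_split big_split /=; congr (_ + _ + _).
  rewrite sumEFin -mulr_sumr -natr_sum; congr (_ * _%:R)%:E.
  rewrite /l0norm -sum1_card big_mkcond /=; apply: eq_bigr => i _.
  by rewrite inE; case: (_ != _).
rewrite /eta_X; case: ifPn => [/forallP H|].
  by rewrite big1 // => i _; rewrite /etai H.
rewrite negb_forall => /existsP [j Hj].
rewrite (bigD1 j) //= {1}/etai (negbTE Hj) addye //.
rewrite esum_eqNy; apply/negP => /existsP [k /andP [_]].
by rewrite /etai; case: ifP.
Qed.

Lemma sub_sum (I : eqType) (s : seq I) (a : I -> R) (k : I -> \bar R) :
  (forall i, k i != -oo) ->
  (\sum_(i <- s) a i)%:E - \sum_(i <- s) k i = \sum_(i <- s) ((a i)%:E - k i).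
Proof.
move=> Hk; elim: s => [|b s IH]; first by rewrite !big_nil oppe0 adde0.
have HS : \sum_(i <- s) k i != -oo.
  by apply/negP => /eqP/esum_eqNyP [i [_ _ /eqP]]; rewrite (negbTE (Hk i)).
rewrite !big_cons -IH EFinD oppeD; last first.
  by rewrite /adde_def (negbTE (Hk b)) (negbTE HS) andbF andFb.
by rewrite addeACA.
Qed.

Definition Qi (v : 'cV[R]_n) (i : 'I_n) (y : R) : \bar R :=
  ((v i ord0) * y)%:E - ki i y.

Lemma diff_sum v x :
  (dotv v x)%:E - g_nu lam h S0 S1 x = \sum_(i < n) Qi v i (x i ord0).
Proof. by rewrite g_sum /dotv sub_sum // => i; apply: ki_neq. Qed.

Lemma Qi0 v i : etai i 0%R = 0 -> Qi v i 0%R = 0.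
Proof.
by move=> e; rewrite /Qi /ki e eqxx /= !mulr0 h0 !adde0 oppe0 adde0.
Qed.

Lemma Qioo v i y : etai i y = +oo -> Qi v i y = -oo.
Proof.
move=> e; rewrite /Qi /ki e addey //.
by rewrite adde_eq_ninfty negb_or; case: hprop => ->; rewrite andbT.
Qed.

Lemma QiE v i y : y != 0%R -> etai i y = 0 -> Qi v i y = E1 R lam h (v i ord0) y.
Proof.
move=> y0 e; rewrite /Qi /ki e y0 /= mulr1 adde0 /E1 oppeD //.
  by rewrite addeA addeAC.
Qed.

Definition cval (v : 'cV[R]_n) (i : 'I_n) : \bar R :=
  if i \in S0 then 0 else if i \in S1 then conj1 h (v i ord0) - lam%:E
  else maxe (conj1 h (v i ord0) - lam%:E) 0.

Lemma Q_clean (disj : [disjoint S0 & S1]) v i y :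
  Qi v i y = if i \in S0 then (if y == 0%R then 0 else -oo)
    else if i \in S1 then (if y == 0%R then -oo else E1 R lam h (v i ord0) y)
    else (if y == 0%R then 0 else E1 R lam h (v i ord0) y).
Proof.
case: ifPn => i0.
  have i1 := disjointFr disj i0.
  have [->|y0] := eqVneq y 0%R.
    by rewrite Qi0 // /etai i0 i1 eqxx.
  by rewrite Qioo // /etai i0 (negbTE y0).
case: ifPn => i1.
  have [->|y0] := eqVneq y 0%R.
    by rewrite Qioo // /etai (negbTE i0) i1 eqxx.
  by rewrite QiE // /etai (negbTE i0) i1 y0.
have [->|y0] := eqVneq y 0%R.
  by rewrite Qi0 // /etai (negbTE i0) (negbTE i1).
by rewrite QiE // /etai (negbTE i0) (negbTE i1).
Qed.

Lemma conj_formula (disj : [disjoint S0 & S1]) v :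
  conjv (g_nu lam h S0 S1) v = \sum_(i < n) cval v i.
Proof.
rewrite /conjv.
have -> : range (fun x => (dotv v x)%:E - g_nu lam h S0 S1 x) =
    range (fun y : 'I_n -> R => \sum_(i <- index_enum 'I_n) Qi v i (y i)).
  apply/seteqP; split => _ [x _ <-].
    by exists (fun i => x i ord0) => //; rewrite diff_sum.
  exists (\col_i x i) => //; rewrite diff_sum; apply: eq_bigr => i _.
  by rewrite mxE.
rewrite sup_sep ?index_enum_uniq //; apply: eq_bigr => i _.
rewrite /cval.
have -> : Qi v i = (fun y => if i \in S0 then (if y == 0%R then 0 else -oo)
    else if i \in S1 then (if y == 0%R then -oo else E1 R lam h (v i ord0) y)
    else (if y == 0%R then 0 else E1 R lam h (v i ord0) y)).
  by apply: funext => y; apply: Q_clean.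
case: ifPn => _; first exact: claimC.
case: ifPn => _; first exact: claimA.
exact: claimB.
Qed.

End Conj.



Lemma final_alg (R : realType) (F C P0 P1 : \bar R) : F != +oo -> C != -oo -> 0 <= P0 ->
  P1 \is a fin_num -> (F - (C + P0 + P1) != -oo \/ P0 != +oo) ->
  F - C = F - (C + P0 + P1) + P0 + P1.
Proof.
move: F C P0 P1 => [f| |] [c| |] [q| |] [p| |] //= _ _ Hq _ H; move: H.
- by move=> _; rewrite -!EFinD; congr (_%:E); ring.
- by case.
Qed.

Lemma maxr_split (R : realType) (a : R) : (Num.max a 0 = a + Num.max (- a) 0)%R.
Proof.
case: (leP 0%R a) => ha.
  by rewrite max_r ?addr0 // oppr_le0.
by rewrite max_l ?subrr // oppr_ge0 ltW.
Qed.



Theorem proposition3p3 (R : realType) (m n : nat) (lam : R) (A : 'M[R]_(m, n))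
  (f : 'cV[R]_m -> \bar R) (h : R -> \bar R)
  (S0 S1 Sb S0' S1' Sb' : {set 'I_n}) :
  (0 < lam)%R ->
  properv f -> closedv f -> convexv f ->
  proper1 h -> closed1 h -> convex1 h ->
  dom1 h 0%R -> h 0%R = 0 -> accum0 (dom1 h) ->
  partition3 S0 S1 Sb -> partition3 S0' S1' Sb' ->
  S0 \subset S0' -> S1 \subset S1' ->
  forall u : 'cV[R]_m,
    (* the right-hand side is well defined (not of the form -oo + +oo) *)
    (D_nu A f lam h S0 S1 u != -oo \/
     \sum_(i in S0' :\: S0) phi0 lam h ((A^T *m u) i ord0) != +oo) ->
    D_nu A f lam h S0' S1' u =
      D_nu A f lam h S0 S1 u
      + \sum_(i in S0' :\: S0) phi0 lam h ((A^T *m u) i ord0)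
      + \sum_(i in S1' :\: S1) phi1 lam h ((A^T *m u) i ord0).
Proof.
move=> lam0 fprop _ _ hprop _ hconv _ h0 hacc [d01 _ _ _] [d01' _ _ _] s0 s1 u H.
rewrite /D_nu in H *.
rewrite !(@conj_formula _ _ _ hprop hconv h0 hacc) // in H *.
set v := A^T *m u in H *.
have key : \sum_(i < n) cval R lam h n S0 S1 v i =
   \sum_(i < n) cval R lam h n S0' S1' v i
   + \sum_(i in S0' :\: S0) phi0 lam h (v i ord0)
   + \sum_(i in S1' :\: S1) phi1 lam h (v i ord0).
  rewrite !(big_mkcond (fun i => i \in _)) -!big_split; apply: eq_bigr => i _ /=.
  have dge0 := @conj1_ge0 _ _ h0 (v i ord0).
  rewrite /cval /phi0 /phi1 !inE.
  case: (boolP (i \in S0)) => i0 /=.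
    have i0' : i \in S0' by apply: (fintype.subsetP s0).
    by rewrite i0' (disjointFr d01' i0') /= ?andbF ?andbT ?adde0.
  case: (boolP (i \in S1)) => i1 /=.
    have i1' : i \in S1' by apply: (fintype.subsetP s1).
    by rewrite i1' (disjointFl d01' i1') /= ?andbF ?andbT ?adde0.
  case: (boolP (i \in S0')) => i0' /=.
    by rewrite (disjointFr d01' i0') /= ?andbF ?andbT ?adde0 ?add0e.
  case: (boolP (i \in S1')) => i1' /=; last by rewrite ?andbF ?andbT ?adde0.
  rewrite ?andbF ?andbT ?adde0 ?add0e.
  move: dge0; case: (conj1 h (v i ord0)) => [r| |] // _.
    rewrite -!EFinD; have -> : (0 : \bar R) = (0%R)%:E by [].
    by rewrite -!EFin_max -EFinD (@maxr_split _ (r - lam)%R) opprB.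
  by rewrite addye // addeNy maxye maxNye adde0.
rewrite key in H *.
apply: final_alg => //.
- case: fprop => fn [x0 fx0].
  have : (dotv (- u) x0)%:E - f x0 <= conjv f (- u).
    by apply: ereal_sup_ubound; exists x0.
  case: (conjv f (- u)) => // Hle.
  move: Hle (fn x0) fx0; case: (f x0) => //.
- apply/negP => /eqP/esum_eqNyP [i [_ _]].
  have dge0 := @conj1_ge0 _ _ h0 (v i ord0).
  rewrite /cval; case: ifP => _ //; case: ifP => _.
    by move: dge0; case: (conj1 h (v i ord0)).
  move=> Hm; have : (0 : \bar R) <= maxe (conj1 h (v i ord0) - lam%:E) 0.
    by rewrite le_max lexx orbT.
  by rewrite Hm.
- by apply: sume_ge0 => i _; rewrite /phi0 le_max lexx orbT.
- apply/sum_fin_numP => i _ _.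
  have dge0 := @conj1_ge0 _ _ h0 (v i ord0).
  rewrite /phi1; move: dge0; case: (conj1 h (v i ord0)) => [r| |] // _.
    by rewrite -EFinB; have -> : (0 : \bar R) = (0%R)%:E by []; rewrite -EFin_max.
  by rewrite /= maxNye.
Qed.
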